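(* Let $K$ be such that $A+BK$ is Schur stable, and let $\mathcal{S}=\{\sigma\in\mathbf{C}: A+(1-\sigma)LC \text{ is Schur stable}\}$ be the consensus region. Let $\mathcal{G}\in\Gamma_N$ with eigenvalues $1,\lambda_2,\dots,\lambda_N$ of $\mathcal{D}$, where $|\lambda_i|<1$ for $i\ge2$. If $\lambda_i\in\mathcal{S}$ for all $i=2,\dots,N$, then the agents reach consensus under the protocol: for all initial conditions, $\|x_i(k)-x_j(k)\|\to0$ for all $i,j$.
   Context: Agents: $x_i(k+1)=Ax_i(k)+Bu_i(k)$, $y_i=Cx_i$, $i=1,\dots,N$, with $A\in\mathbf{R}^{n\times n}$, $B\in\mathbf{R}^{n\times p}$, $C\in\mathbf{R}^{q\times n}$. For a directed graph $\mathcal{G}$ on nodes $\{1,\dots,N\}$, its row-stochastic matrix $\mathcal{D}=(d_{ij})$ satisfies $d_{ii}>0$, $d_{ij}>0$ for $j\ne i$ iff $(j,i)$ is an edge, $d_{ij}=0$ otherwise, $\sum_jd_{ij}=1$. $\Gamma_N$ is the set of directed graphs on $N$ nodes containing a directed spanning tree. Protocol with $K\in\mathbf{R}^{p\times n}$, $L\in\mathbf{R}^{n\times q}$: $\zeta_i=\sum_j d_{ij}(y_i-y_j)$, $v_i(k+1)=(A+BK)v_i(k)+L\big(\sum_j d_{ij}C(v_i-v_j)-\zeta_i\big)$, $u_i=Kv_i$. Schur stable: all eigenvalues of modulus $<1$. *)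

(* Defs.v *)
(* The scalar field is an arbitrary Archimedean numeric closed
   field F (e.g. the complex numbers); "real" objects are those with entries in
   Num.real. *)
From HB Require Import structures.
From mathcomp Require Import all_boot all_order all_algebra all_fingroup.
Set Implicit Arguments. Unset Strict Implicit. Unset Printing Implicit Defensive.
Import Order.TTheory GRing.Theory Num.Theory.
Local Open Scope ring_scope.

Definition schur_stable (F : archiClosedFieldType) (n : nat) (M : 'M[F]_n) : Prop :=
  forall lam : F, eigenvalue M lam -> `|lam| < 1.

Definition real_mx (F : archiClosedFieldType) (m n : nat) (M : 'M[F]_(m, n)) : Prop :=
  forall i j, M i j \is Num.real.

(* Directed graph on nodes 'I_N: E j i means (j,i) is an edge (j -> i). *)
Definition has_spanning_tree (N : nat) (E : rel 'I_N) : Prop :=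
  exists r : 'I_N, forall i : 'I_N, connect E r i.

Definition row_stochastic_of (F : archiClosedFieldType) (N : nat)
    (E : rel 'I_N) (D : 'M[F]_N) : Prop :=
  [/\ forall i, 0 < D i i,
      forall i j, i != j -> (0 < D i j <-> E j i),
      forall i j, i != j -> ~~ E j i -> D i j = 0,
      forall i j, D i j \is Num.real
    & forall i, \sum_j D i j = 1].

Definition vnorm (F : archiClosedFieldType) (n : nat) (v : 'cV[F]_n) : F :=
  sqrtC (\sum_i `|v i 0| ^+ 2).

Definition tends_to_0 (F : archiClosedFieldType) (u : nat -> F) : Prop :=
  forall eps : F, 0 < eps -> exists k0 : nat, forall k : nat, (k0 <= k)%N -> `|u k| < eps.

Definition protocol_traj (F : archiClosedFieldType) (n p q N : nat)
    (A : 'M[F]_n) (B : 'M[F]_(n, p)) (C : 'M[F]_(q, n))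
    (K : 'M[F]_(p, n)) (L : 'M[F]_(n, q)) (D : 'M[F]_N)
    (x v : nat -> 'I_N -> 'cV[F]_n) : Prop :=
  forall (k : nat) (i : 'I_N),
    let y := fun j => C *m x k j in
    let u := K *m v k i in
    let zeta := \sum_j D i j *: (y i - y j) in
    x k.+1 i = A *m x k i + B *m u /\
    v k.+1 i = (A + B *m K) *m v k i
               + L *m (\sum_j D i j *: (C *m (v k i - v k j)) - zeta).

(* Main.v *)
Require Import Defs.
From HB Require Import structures.
From mathcomp Require Import all_boot all_order all_algebra all_fingroup.
Set Implicit Arguments. Unset Strict Implicit. Unset Printing Implicit Defensive.
Import Order.TTheory GRing.Theory Num.Theory.
Local Open Scope ring_scope.

Section Analysis.
Variable F : archiClosedFieldType.
Implicit Types (u w s : nat -> F).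

Lemma t0_ext u w : (forall k, u k = w k) -> tends_to_0 u -> tends_to_0 w.
Proof. by move=> e h eps /h [k0 Hk]; exists k0 => k /Hk; rewrite e. Qed.

Lemma t0_0 : tends_to_0 (fun _ : nat => (0 : F)).
Proof. by move=> eps He; exists 0%N => k _; rewrite normr0. Qed.

Lemma t0_add u w : tends_to_0 u -> tends_to_0 w -> tends_to_0 (fun k => u k + w k).
Proof.
move=> hu hw eps He.
have He2 : 0 < eps / 2 by rewrite divr_gt0.
have [k1 H1] := hu _ He2; have [k2 H2] := hw _ He2.
exists (maxn k1 k2) => k; rewrite geq_max => /andP[/H1 h1 /H2 h2].
apply: (le_lt_trans (ler_normD _ _)); rewrite [eps]splitr; exact: ltrD.
Qed.

Lemma t0_scale a u : a = 0 \/ tends_to_0 u -> tends_to_0 (fun k => a * u k).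
Proof.
case=> [->|hu]; first by apply: (t0_ext _ t0_0) => k; rewrite mul0r.
have [->|a0] := eqVneq a 0; first by apply: (t0_ext _ t0_0) => k; rewrite mul0r.
move=> eps He.
have Ha : 0 < `|a| by rewrite normr_gt0.
have [k0 H0] := hu (eps / `|a|) (divr_gt0 He Ha).
exists k0 => k /H0 h; rewrite normrM.
by rewrite -(ltr_pM2l Ha) mulrCA divff ?mulr1 ?gt_eqF in h.
Qed.


Lemma t0_sum (I : Type) (r : seq I) (P : pred I) (f : I -> nat -> F) :
  (forall i, P i -> tends_to_0 (f i)) ->
  tends_to_0 (fun k => \sum_(i <- r | P i) f i k).
Proof.
move=> hf; elim: r => [|i r IH].
  by apply: (t0_ext _ t0_0) => k; rewrite big_nil.
case Pi: (P i).
  by apply: (t0_ext _ (t0_add (hf _ Pi) IH)) => k; rewrite big_cons Pi.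
by apply: (t0_ext _ IH) => k; rewrite big_cons Pi.
Qed.

Lemma bernoulli (h : F) (m : nat) : 0 <= h -> 1 + h *+ m <= (1 + h) ^+ m.
Proof.
move=> h0; elim: m => [|m IH]; first by rewrite mulr0n addr0 expr0.
rewrite exprSr.
have e : (1 + h *+ m) * (1 + h) = 1 + h *+ m.+1 + (h *+ m) * h.
  rewrite mulrDl mul1r mulrDr mulr1 mulrSr -!addrA; congr (1 + _).
  by rewrite addrCA.
apply: (@le_trans _ _ ((1 + h *+ m) * (1 + h))).
  by rewrite e lerDl mulr_ge0 ?mulrn_wge0.
by rewrite ler_wpM2r // addr_ge0.
Qed.

Lemma geo (c S eps : F) : 0 <= c -> c < 1 -> 0 <= S -> 0 < eps ->
  exists m0, forall m, (m0 <= m)%N -> c ^+ m * S < eps.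
Proof.
move=> c0 c1 S0 e0.
have [->|cn0] := eqVneq c 0.
  by exists 1%N => -[|m] //= _; rewrite expr0n /= mul0r.
have cp : 0 < c by rewrite lt_def cn0.
pose h := c^-1 - 1.
have hp : 0 < h by rewrite subr_gt0 invf_gt1.
have he : 1 + h = c^-1 by rewrite /h addrC subrK.
have hep : 0 < h * eps by rewrite mulr_gt0.
exists (Num.Def.archi_bound (S / (h * eps))) => m hm.
set m0 := Num.Def.archi_bound _ in hm.
have b0 : S / (h * eps) < m0%:R by apply: archi_boundP; rewrite divr_ge0 // ltW.
have key : S < (1 + h) ^+ m * eps.
  have h1 : S < m0%:R * (h * eps) by rewrite -ltr_pdivrMr.
  apply: (lt_le_trans h1).
  apply: (@le_trans _ _ ((1 + h *+ m) * eps)); last first.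
    by apply: ler_wpM2r; [exact: ltW | apply: bernoulli; exact: ltW].
  apply: (@le_trans _ _ ((h *+ m) * eps)).
    apply: (@le_trans _ _ (m%:R * (h * eps))); first by apply: ler_wpM2r; [exact: ltW | rewrite ler_nat].
    by rewrite mulr_natl -mulrnAl.
  by apply: ler_wpM2r; [exact: ltW | rewrite lerDr ler01].
have cm : 0 < c ^+ m by rewrite exprn_gt0.
rewrite -(ltr_pM2l cm) in key.
by rewrite he mulrA -exprMn divff // expr1n mul1r in key.
Qed.


Lemma iss_scalar (d : F) u s : `|d| < 1 -> tends_to_0 u ->
  (forall k, s k.+1 = d * s k + u k) -> tends_to_0 s.
Proof.
move=> d1 hu hs eps e0.
set c := `|d|.
have e2 : 0 < eps / 2 by rewrite divr_gt0.
have dl : 0 < (1 - c) * (eps / 2) by rewrite mulr_gt0 // subr_gt0.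
have [k1 H1] := hu _ dl.
have bnd : forall m, `|s (k1 + m)%N| <= c ^+ m * `|s k1| + eps / 2.
  elim=> [|m IH]; first by rewrite addn0 expr0 mul1r lerDl ltW.
  rewrite addnS hs.
  apply: (le_trans (ler_normD _ _)).
  apply: (@le_trans _ _ (c * (c ^+ m * `|s k1| + eps / 2) + (1 - c) * (eps / 2))).
    apply: lerD; first by rewrite normrM; apply: ler_wpM2l => //.
    by apply: ltW; apply: H1; exact: leq_addr.
  rewrite mulrDr mulrA -exprS -addrA -mulrDl [c + _]addrC subrK mul1r.
  by [].
have [m0 Hm] := geo (normr_ge0 d) d1 (normr_ge0 (s k1)) e2.
exists (k1 + m0)%N => k hk.
have k1k : (k1 <= k)%N by apply: leq_trans hk; exact: leq_addr.
rewrite -(subnKC k1k).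
apply: (le_lt_trans (bnd _)).
apply: (@lt_le_trans _ _ (eps / 2 + eps / 2)); last by rewrite -splitr.
apply: ltr_leD => //; apply: Hm.
by rewrite leq_subRL // addnC.
Qed.

Lemma t0_mul u w : tends_to_0 u -> tends_to_0 w -> tends_to_0 (fun k => u k * w k).
Proof.
move=> hu hw eps e0.
have [k1 H1] := hu _ ltr01; have [k2 H2] := hw _ e0.
exists (maxn k1 k2) => k; rewrite geq_max => /andP[/H1 h1 /H2 h2].
rewrite normrM -[eps]mul1r; apply: ltr_pM => //.
Qed.

Lemma t0_norm u : tends_to_0 u -> tends_to_0 (fun k => `|u k|).
Proof. by move=> hu eps /hu [k0 H]; exists k0 => k /H; rewrite normr_id. Qed.

Lemma t0_sqrt u : (forall k, 0 <= u k) -> tends_to_0 u -> tends_to_0 (fun k => sqrtC (u k)).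
Proof.
move=> u0 hu eps e0.
have [k0 H] := hu (eps ^+ 2) (exprn_gt0 2 e0).
exists k0 => k /H h.
rewrite ger0_norm ?sqrtC_ge0 //.
have h' : u k < eps ^+ 2 by rewrite -(ger0_norm (u0 k)).
rewrite -[X in _ < X](sqrCK (ltW e0)) ltr_sqrtC // ?nnegrE //.
by rewrite exprn_ge0 // ltW.
Qed.

End Analysis.

Section Mx.
Variable F : archiClosedFieldType.

Definition mt0 m n (Z : nat -> 'M[F]_(m, n)) := forall i j, tends_to_0 (fun k => Z k i j).

Lemma mt0_ext m n (Z W : nat -> 'M[F]_(m, n)) : (forall k, Z k = W k) -> mt0 Z -> mt0 W.
Proof. by move=> e h i j; apply: (t0_ext _ (h i j)) => k; rewrite e. Qed.

Lemma mt0_mull m n p (X : 'M[F]_(p, m)) (Z : nat -> 'M[F]_(m, n)) :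
  mt0 Z -> mt0 (fun k => X *m Z k).
Proof.
move=> h i j.
have H := @t0_sum F _ (index_enum 'I_m) predT (fun l k => X i l * Z k l j)
  (fun l _ => @t0_scale F (X i l) _ (or_intror (h l j))).
by apply: t0_ext H => k; rewrite mxE.
Qed.

Lemma mt0_mulr m n p (X : 'M[F]_(n, p)) (Z : nat -> 'M[F]_(m, n)) :
  mt0 Z -> mt0 (fun k => Z k *m X).
Proof.
move=> h i j.
have H := @t0_sum F _ (index_enum 'I_n) predT (fun l k => X l j * Z k i l)
  (fun l _ => @t0_scale F (X l j) _ (or_intror (h i l))).
by apply: t0_ext H => k; rewrite mxE; apply: eq_bigr => l _; rewrite mulrC.
Qed.

Lemma mt0_add m n (Z W : nat -> 'M[F]_(m, n)) : mt0 Z -> mt0 W -> mt0 (fun k => Z k + W k).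
Proof.
move=> h1 h2 i j; apply: (t0_ext _ (t0_add (h1 i j) (h2 i j))).
by move=> k; rewrite mxE.
Qed.

Lemma mt0_opp m n (Z : nat -> 'M[F]_(m, n)) : mt0 Z -> mt0 (fun k => - Z k).
Proof.
move=> h i j; apply: (t0_ext _ (@t0_scale F (-1) _ (or_intror (h i j)))).
by move=> k; rewrite mxE mulN1r.
Qed.

Lemma mt0_sub m n (Z W : nat -> 'M[F]_(m, n)) : mt0 Z -> mt0 W -> mt0 (fun k => Z k - W k).
Proof. by move=> h1 h2; apply: mt0_add => //; apply: mt0_opp. Qed.

Lemma iss_trig n m (T : 'M[F]_n) (Z W : nat -> 'M[F]_(n, m)) :
  is_trig_mx T -> (forall i, `|T i i| < 1) -> mt0 W ->
  (forall k, Z k.+1 = T *m Z k + W k) -> mt0 Z.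
Proof.
move=> /is_trig_mxP Ttr Td hW hZ.
suff H : forall p (i : 'I_n), (i < p)%N -> forall j, tends_to_0 (fun k => Z k i j).
  by move=> i j; apply: (H i.+1).
elim=> [|p IH] i //; rewrite ltnS leq_eqVlt => /orP [/eqP ei | /IH //] j.
apply: (@iss_scalar _ (T i i)
   (fun k => \sum_(l | l != i) T i l * Z k l j + W k i j)) => //.
  apply: t0_add => //; apply: t0_sum => l lni.
  apply: t0_scale; case: (ltngtP l i) => hl.
  - by right; apply: IH; rewrite -ei.
  - by left; apply: Ttr.
  - by move/val_inj: hl lni => ->; rewrite eqxx.
by move=> k; rewrite hZ !mxE (bigD1 i) //= addrA.
Qed.

Lemma char_poly_sim n (P M : 'M[F]_n) : P \in unitmx ->
  char_poly (P *m M *m invmx P) = char_poly M.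
Proof.
move=> Pu.
have e : char_poly_mx (P *m M *m invmx P) =
    map_mx polyC P *m char_poly_mx M *m map_mx polyC (invmx P).
  rewrite /char_poly_mx [in RHS]mulmxBr [in RHS]mulmxBl [in RHS]scalar_mxC.
  rewrite -[in RHS](mulmxA 'X%:M) -[in RHS](map_mxM _ P) mulmxV // map_mx1 mulmx1.
  by rewrite !map_mxM.
rewrite /char_poly e !det_mulmx mulrC mulrA -det_mulmx -map_mxM mulVmx //.
by rewrite map_mx1 det1 mul1r.
Qed.

Lemma root_prod_ord n (a : 'I_n -> F) x :
  root (\prod_(i < n) ('X - (a i)%:P)) x -> exists i, x = a i.
Proof.
elim: n a => [|n IH] a; first by rewrite big_ord0 rootC oner_eq0.
rewrite big_ord_recr rootM => /orP[/IH [i ->]|]; first by exists (widen_ord (leqnSn n) i).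
by rewrite root_XsubC => /eqP ->; exists ord_max.
Qed.


Lemma iss_schur n m (M : 'M[F]_n) (Z W : nat -> 'M[F]_(n, m)) :
  schur_stable M -> mt0 W -> (forall k, Z k.+1 = M *m Z k + W k) -> mt0 Z.
Proof.
case: n M Z W => [|n] M Z W hM hW hZ; first by move=> [].
have [P Pu Ptr] := Schur M (ltn0Sn n).
have Pun := unitarymx_unit Pu.
rewrite /similar_to /= conjumx // in Ptr.
set T := P *m M *m invmx P in Ptr.
have hT : forall i, `|T i i| < 1.
  move=> i; apply: hM.
  rewrite eigenvalue_root_char -(char_poly_sim M Pun) char_poly_trig //.
  by rewrite (bigD1 i) //= rootM root_XsubC eqxx.
have hZ' : mt0 (fun k => P *m Z k).
  apply: (iss_trig Ptr hT (mt0_mull P hW)) => k.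
  rewrite hZ mulmxDr; congr (_ + _).
  by rewrite /T -!mulmxA mulKmx.
apply: mt0_ext (mt0_mull (invmx P) hZ') => k.
by rewrite mulmxA mulVmx // mul1mx.
Qed.

End Mx.

Section Red.
Variable F : archiClosedFieldType.

Lemma char_poly_reduce N (D : 'M[F]_(1 + N)) : (forall i, \sum_j D i j = 1) ->
  char_poly D = ('X - 1%:P) * char_poly (drsubmx D - const_mx 1 *m ursubmx D).
Proof.
move=> Drow.
set c : 'M[F]_(N, 1) := const_mx 1.
set Du := ursubmx D; set Dd := drsubmx D; set Dl := ulsubmx D; set Ddl := dlsubmx D.
set D' := Dd - c *m Du.
have R1 : Dl + Du *m c = 1%:M.
  apply/matrixP => a b; rewrite !ord1 !mxE.
  rewrite -(Drow (lshift N 0)) big_split_ord /= big_ord1.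
  by congr (_ + _); apply: eq_bigr => l _; rewrite !mxE mulr1.
have R2 : Ddl + Dd *m c = c.
  apply/matrixP => a b; rewrite !ord1 !mxE.
  rewrite -(Drow (rshift 1 a)) big_split_ord /= big_ord1.
  by congr (_ + _); apply: eq_bigr => l _; rewrite !mxE mulr1.
set S0 : 'M[F]_(1 + N) := block_mx 1%:M 0 (- c) 1%:M.
set S1 : 'M[F]_(1 + N) := block_mx 1%:M 0 c 1%:M.
have S01 : S0 *m S1 = 1%:M.
  rewrite mulmx_block !mul1mx !mul0mx !mulmx0 !mulmx1 !addr0 add0r addNr.
  by rewrite -scalar_mx_block.
have [S0u S1u] := mulmx1_unit S01.
have S0i : invmx S0 = S1.
  by rewrite -[RHS](mulKmx S0u) S01 mulmx1.
set B : 'M[F]_(1 + N) := block_mx 1%:M Du 0 D'.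
have SB0 : S0 *m D = B *m S0.
  rewrite -[D]submxK /S0 /B mulmx_block mulmx_block.
  rewrite !mul1mx !mul0mx ?mulmx0 !mulmx1 ?add0r ?addr0 -/Dl -/Du -/Dd -/Ddl.
  have eDl : Dl = 1%:M - Du *m c by rewrite -R1 -addrA subrr addr0.
  have eDdl : Ddl = c - Dd *m c by rewrite -{1}R2 -addrA subrr addr0.
  rewrite mulmxN -eDl; congr block_mx; last by rewrite mulNmx addrC.
  rewrite eDl eDdl mulNmx mulmxN mulmxBr mulmx1 mulmxBl !mulmxA opprB.
  by rewrite addrA subrK opprB.
have SB : S0 *m D *m invmx S0 = B by rewrite SB0 mulmxK.
rewrite -(char_poly_sim D S0u) SB /char_poly.
have -> : char_poly_mx B = block_mx (char_poly_mx (1%:M : 'M[F]_1))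
    (- map_mx polyC Du) 0 (char_poly_mx D').
  rewrite /char_poly_mx /B map_block_mx (scalar_mx_block 1 N 'X) opp_block_mx.
  rewrite add_block_mx map_mx0 oppr0 add0r addr0.
  by rewrite -/(char_poly_mx D') map_scalar_mx.
rewrite det_ublock; congr (_ * _).
by rewrite -/(char_poly _) char_poly_trig ?scalar_mx_is_trig // big_ord1 mxE.
Qed.


Lemma D'E N (D : 'M[F]_(1 + N)) a b :
  (drsubmx D - const_mx 1 *m ursubmx D) a b =
  D (lift ord0 a) (lift ord0 b) - D ord0 (lift ord0 b).
Proof.
rewrite !mxE big_ord1 !mxE mul1r.
by congr (D _ _ - D _ _); apply: val_inj.
Qed.

End Red.

Lemma subACA (V : zmodType) (a b c d : V) : (a - b) - (c - d) = (a - c) - (b - d).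
Proof.
rewrite !opprB addrACA [in RHS]addrACA; congr (_ + _); exact: addrC.
Qed.

Lemma addsub3 (V : zmodType) (a b c d : V) : a + b + c - (d + b) = a - d + c.
Proof.
by rewrite (addrAC a b c) [d + b]addrC addrKA addrAC.
Qed.

Lemma mxBE (R : zmodType) m n (X Y : 'M[R]_(m, n)) i j : (X - Y) i j = X i j - Y i j.
Proof. by rewrite !mxE. Qed.

Lemma mx1E (R : pzRingType) n (i j : 'I_n) : (1%:M : 'M[R]_n) i j = (i == j)%:R.
Proof. by rewrite mxE. Qed.

Lemma subsub (V : zmodType) (a b c : V) : (a - c) - (b - c) = a - b.
Proof. by rewrite opprB addrA subrK. Qed.

Lemma aux (R : comPzRingType) (m n : nat) (M1 M2 : 'M[R]_(m, n)) (a b X Y : 'cV[R]_n) :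
  M1 *m a + M2 *m ((a - b) - X) - (M1 *m b + M2 *m (- Y)) =
  M1 *m (a - b) + M2 *m ((a - b) - (X - Y)).
Proof.
rewrite opprD addrACA -mulmxBr -mulmxBr; congr (_ + _ *m _).
by rewrite opprK opprB addrA addrAC.
Qed.

Lemma mulE (R : pzSemiRingType) m n p (X : 'M[R]_(m, n)) (Y : 'M[R]_(n, p)) i j :
  (X *m Y) i j = \sum_k X i k * Y k j.
Proof. by rewrite mxE. Qed.

Lemma sclE (R : pzSemiRingType) m n (a : R) (X : 'M[R]_(m, n)) i j : (a *: X) i j = a * X i j.
Proof. by rewrite mxE. Qed.

Lemma trE (R : Type) m n (X : 'M[R]_(m, n)) i j : X^T i j = X j i.
Proof. by rewrite mxE. Qed.

Lemma mxDE (R : nmodType) m n (X Y : 'M[R]_(m, n)) i j : (X + Y) i j = X i j + Y i j.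
Proof. by rewrite mxE. Qed.

Lemma colE (R : Type) m n (X : 'M[R]_(m, n)) j i k : (col j X) i k = X i j.
Proof. by rewrite mxE. Qed.

Lemma colvE (R : Type) m (f : 'I_m -> R) i k : (\col_i0 f i0) i k = f i.
Proof. by rewrite mxE. Qed.

Lemma colrec (R : comPzRingType) (n N : nat) (A0 LC : 'M[R]_n) (T : 'M[R]_N)
    (Hk : 'M[R]_(n, N)) a s z :
  (A0 *m Hk + LC *m (Hk *m (1%:M - T)^T)) s a =
  ((A0 + (1 - T a a) *: LC) *m col a Hk +
     LC *m \col_s0 (\sum_(c | c != a) (- T a c) * Hk s0 c)) s z.
Proof.
have inner : forall t, \sum_c Hk t c * (1%:M - T)^T c a =
    (1 - T a a) * Hk t a + \sum_(c | c != a) (- T a c) * Hk t c.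
  move=> t; rewrite (bigD1 a) //= trE mxBE mx1E eqxx mulrC; congr (_ + _).
  apply: eq_bigr => c cna; rewrite trE mxBE mx1E eq_sym (negbTE cna) sub0r.
  exact: mulrC.
rewrite !mxDE !mulE.
under [X in _ + X = _]eq_bigr => t _ do rewrite mulE inner mulrDr.
under [in RHS]eq_bigr => t _ do rewrite mxDE sclE colE mulrDl.
under [X in _ = _ + X]eq_bigr => t _ do rewrite colvE.
rewrite !big_split /= addrA; congr (_ + _ + _).
by apply: eq_bigr => t _; rewrite mulrCA mulrA.
Qed.

Lemma aux2 (R : comPzRingType) (n p : nat) (A0 : 'M[R]_n) (B0 : 'M[R]_(n, p))
    (K0 : 'M[R]_(p, n)) (xi xj vi vj : 'cV[R]_n) :
  A0 *m xi + B0 *m (K0 *m vi) - (A0 *m xj + B0 *m (K0 *m vj)) =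
  (A0 + B0 *m K0) *m (xi - xj) + B0 *m K0 *m ((vi - xi) - (vj - xj)).
Proof.
rewrite [in RHS]mulmxDl -[in RHS]addrA -[in RHS]mulmxDr subACA.
rewrite [in RHS](addrC (xi - xj)) subrK opprD addrACA.
by rewrite -!mulmxBr !mulmxA.
Qed.

Unset Implicit Arguments.
Theorem corollary1 (F : archiClosedFieldType) (n p q N : nat)
    (A : 'M[F]_n) (B : 'M[F]_(n, p)) (C : 'M[F]_(q, n))
    (K : 'M[F]_(p, n)) (L : 'M[F]_(n, q))
    (E : rel 'I_N) (D : 'M[F]_N) (lam : 'I_N.-1 -> F) :
  real_mx A -> real_mx B -> real_mx C -> real_mx K -> real_mx L ->
  schur_stable (A + B *m K) ->
  has_spanning_tree E ->
  row_stochastic_of E D ->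
  char_poly D = ('X - 1%:P) * \prod_(i < N.-1) ('X - (lam i)%:P) ->
  (forall i, `|lam i| < 1) ->
  (forall i, schur_stable (A + (1 - lam i) *: (L *m C))) ->
  forall x v : nat -> 'I_N -> 'cV[F]_n,
    (forall i, real_mx (x 0%N i)) -> (forall i, real_mx (v 0%N i)) ->
    protocol_traj A B C K L D x v ->
    forall i j : 'I_N, tends_to_0 (fun k => vnorm (x k i - x k j)).
Proof.
case: N E D lam => [|N] E D lam.
  by move=> _ _ _ _ _ _ _ _ _ _ _ x v _ _ _ [].
move=> _ _ _ _ _ hABK _ [_ _ _ _ Drow] hchar hlam hS x v _ _ hp i j.
pose e k i := v k i - x k i.
have he : forall k (i : 'I_N.+1), e k.+1 i =
    A *m e k i + (L *m C) *m \sum_j D i j *: (e k i - e k j).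
  move=> k i0; have [hx hv] := hp k i0.
  have hs : \sum_j D i0 j *: (C *m (v k i0 - v k j)) -
      \sum_j D i0 j *: (C *m x k i0 - C *m x k j) =
      C *m \sum_j D i0 j *: (e k i0 - e k j).
    rewrite -sumrB mulmx_sumr; apply: eq_bigr => l _.
    by rewrite -scalerBr -scalemxAr -mulmxBr -mulmxBr subACA.
  rewrite /e hv hx hs mulmxDl -!mulmxA mulmxBr.
  exact: addsub3.
pose D' : 'M[F]_N := drsubmx (D : 'M_(1 + N)) - const_mx 1 *m ursubmx (D : 'M_(1 + N)).
have hD'E : forall a b, D' a b = D (lift ord0 a) (lift ord0 b) - D ord0 (lift ord0 b).
  exact: D'E.
have hcD' : char_poly D' = \prod_(i < N) ('X - (lam i)%:P).
  apply: (@mulfI _ ('X - 1%:P)); first by rewrite polyXsubC_eq0.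
  by rewrite -char_poly_reduce // -hchar.
clearbody D'.
pose g k b := e k (lift ord0 b) - e k ord0.
have sE : forall k (i0 : 'I_N.+1), \sum_j D i0 j *: (e k i0 - e k j) =
    (e k i0 - e k ord0) - \sum_c D i0 (lift ord0 c) *: g k c.
  move=> k i0.
  under eq_bigr => l _ do rewrite -(subsub _ _ (e k ord0)) scalerBr.
  rewrite sumrB -scaler_suml Drow scale1r big_ord_recl subrr scaler0 add0r.
  by [].
have hg : forall k b, g k.+1 b =
    A *m g k b + (L *m C) *m \sum_c ((1%:M - D') b c) *: g k c.
  move=> k b.
  have SS : \sum_c (1%:M - D') b c *: g k c = g k b -
      (\sum_c D (lift ord0 b) (lift ord0 c) *: g k c - \sum_c D ord0 (lift ord0 c) *: g k c).
    under eq_bigr => c _ do rewrite mxBE mx1E scalerBl hD'E scalerBl.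
    rewrite sumrB sumrB (bigD1 b) //= eqxx scale1r big1 ?addr0 //.
    by move=> c /negbTE; rewrite eq_sym => ->; rewrite scale0r.
  rewrite SS [g k.+1 b]/g !he !sE subrr sub0r.
  exact: aux.
pose G k : 'M[F]_(n, N) := \matrix_(r, b) g k b r 0.
have GE : forall k r b, G k r b = g k b r 0 by move=> k r b; rewrite mxE.
have hG : forall k, G k.+1 = A *m G k + (L *m C) *m (G k *m (1%:M - D')^T).
  move=> k; apply/matrixP => r b.
  rewrite GE hg !mxDE; congr (_ + _).
    by rewrite !mulE; apply: eq_bigr => s _; rewrite GE.
  rewrite !mulE; apply: eq_bigr => s _; congr (_ * _).
  rewrite summxE mulE; apply: eq_bigr => c _.
  by rewrite sclE trE GE mulrC.
clearbody G.
have hGt : mt0 G.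
  have [N0|Npos] := posnP N.
    by move=> r c; have := ltn_ord c; rewrite {2}N0.
  have [P Pu Ptr] := Schur D' Npos.
  have Pun := unitarymx_unit Pu.
  rewrite /similar_to /= conjumx // in Ptr.
  set T := P *m D' *m invmx P in Ptr.
  have hTd : forall a, schur_stable (A + (1 - T a a) *: (L *m C)).
    move=> a; have : root (char_poly D') (T a a).
      rewrite -(char_poly_sim D' Pun) char_poly_trig //.
      by rewrite (bigD1 a) //= rootM root_XsubC eqxx.
    by rewrite hcD' => /root_prod_ord [i0 ->]; exact: hS.
  pose H k := G k *m P^T.
  have key : (1%:M - D')^T *m P^T = P^T *m (1%:M - T)^T.
    rewrite -!trmx_mul; congr trmx.
    by rewrite mulmxBr mulmxBl mulmx1 mul1mx /T mulmxKV.
  have hH : forall k, H k.+1 = A *m H k + (L *m C) *m (H k *m (1%:M - T)^T).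
    move=> k; rewrite /H hG mulmxDl !mulmxA.
    by rewrite -(mulmxA _ (1%:M - D')^T) key !mulmxA.
  have hHt : mt0 H.
    suff HH : forall p0 (a : 'I_N), (a < p0)%N -> forall r, tends_to_0 (fun k => H k r a).
      by move=> r a; apply: (HH a.+1).
    elim=> [|p0 IH] a //; rewrite ltnS leq_eqVlt => /orP [/eqP ea | /IH //].
    pose W k : 'M[F]_(n, 1) :=
      (L *m C) *m \col_s (\sum_(c | c != a) (- T a c) * H k s c).
    have hW : mt0 W.
      apply: mt0_mull => s z.
      have := @t0_sum F _ (index_enum 'I_N) (fun c => c != a)
        (fun c k => (- T a c) * H k s c).
      move=> /(_ _) h; apply: t0_ext (h _) => [k|c cna]; first by rewrite colvE.
      apply: t0_scale; case: (ltngtP c a) => hc.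
      - by right; apply: IH; rewrite -ea.
      - by left; move/is_trig_mxP: Ptr => Ttr; rewrite Ttr ?oppr0.
      - by move/val_inj: hc cna => ->; rewrite eqxx.
    have hZ' : mt0 (fun k => col a (H k)).
      apply: (iss_schur (hTd a) hW) => k; apply/matrixP => s z.
      by rewrite colE hH; exact: colrec.
    by move=> r; apply: t0_ext (hZ' r 0) => k; rewrite colE.
  apply: mt0_ext (mt0_mulr (invmx P^T) hHt) => k.
  by rewrite /H -mulmxA mulmxV ?unitmx_tr // mulmx1.
have hd : forall i0 : 'I_N.+1, mt0 (fun k => e k i0 - e k ord0).
  move=> i0; case: (unliftP ord0 i0) => [b ->|->].
    by move=> r c; apply: t0_ext (hGt r b) => k; rewrite GE (ord1 c).
  by move=> r c; apply: t0_ext (@t0_0 F) => k; rewrite subrr mxE.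
have hdij : mt0 (fun k => e k i - e k j).
  by apply: mt0_ext (mt0_sub (hd i) (hd j)) => k; exact: subsub.
pose X k := x k i - x k j.
have hX : mt0 X.
  apply: (iss_schur hABK (mt0_mull (B *m K) hdij)) => k.
  have [hxi _] := hp k i; have [hxj _] := hp k j.
  by rewrite /X hxi hxj aux2.
rewrite /vnorm; apply: t0_sqrt.
  by move=> k; apply: sumr_ge0 => r _; apply: exprn_ge0; exact: normr_ge0.
apply: t0_sum => r _.
apply: t0_ext (t0_mul (t0_norm (hX r 0)) (t0_norm (hX r 0))) => k.
by rewrite expr2.
Qed.
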